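(* Let $\theta\in[0,1]$, and define the stability function and its inverse by $$\mathcal{R}_{\theta}(z)=\frac{1+(1-\theta)z}{1-\theta z},\qquad \mathcal{R}_{\theta}^{-1}(w)=\frac{1-w}{\theta(1-w)-1}.$$ Let $\sigma:\mathbb{R}\to\mathbb{R}$ be a differentiable activation function with $|\sigma|:=\sup_{t}|\sigma'(t)|\in(0,\infty)$. For weight matrices $\gamma_1,\dots,\gamma_n$ (nonzero, of compatible sizes, with $\gamma_1$ having $d$ columns and $\gamma_n$ having $d$ rows) and bias vectors $b_1,\dots,b_n$, set $\tilde{\gamma}_i=\gamma_i/(|\sigma|\,\|\gamma_i\|)$ where $\|\cdot\|$ is the spectral norm, and define the spectrally normalized network $\tilde F(\gamma,x)=\phi_n\circ\cdots\circ\phi_1(x)$ on $\mathbb{R}^d$, where $\phi_i(x)=\sigma(\tilde{\gamma}_i x+b_i)$ with $\sigma$ applied elementwise. Let $S(t)=1/(1+e^{-t})$ be the sigmoid function, let $\gamma_c,\gamma_L\in\mathbb{R}$ be arbitrary scalar parameters, and set $$c:=\mathcal{R}_{\theta}^{-1}\big(1-S(\gamma_c)\big),\qquad r:=\max\Big(0,\ \mathcal{R}_{\theta}^{-1}\big(1-S(\gamma_L)\big)-c\Big),$$ $$F(\gamma,x):=c\,x+r\,\tilde F(\gamma,x).$$ Then the residual layer $y=x+F(\gamma,(1-\theta)x+\theta y)$ is dissipative, i.e., for every $x\in\mathbb{R}^d$, every eigenvalue $\lambda$ of the Jacobian $D_xF(\gamma,x)$ satisfies $|\mathcal{R}_{\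theta}(\lambda)|<1$.
   Context: An implicit residual layer with vector field $F(\gamma,\cdot):\mathbb{R}^d\to\mathbb{R}^d$ and parameter $\theta$ maps $x$ to $y$ defined by $y=x+F(\gamma,(1-\theta)x+\theta y)$. Its stability function is $\mathcal{R}_{\theta}(z)=\frac{1+(1-\theta)z}{1-\theta z}$ for $z\in\mathbb{C}$, and its stability region is the set $\{z\in\mathbb{C}:|\mathcal{R}_{\theta}(z)|<1\}$. The layer is called dissipative if, at every point $x$, all eigenvalues of the Jacobian $D_xF(\gamma,x)$ lie in the stability region. *)

(* Defs.v *)
From HB Require Import structures.
From mathcomp Require Import all_boot all_order all_algebra.
From mathcomp Require Import all_classical all_reals all_analysis.
From mathcomp Require Import complex.
Set Implicit Arguments. Unset Strict Implicit. Unset Printing Implicit Defensive.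
Import Order.TTheory GRing.Theory Num.Theory.
Import numFieldNormedType.Exports.
Local Open Scope classical_set_scope.
Local Open Scope ring_scope.

Section Defs.
Variable R : realType.

Definition stabR (theta : R) (z : R[i]) : R[i] :=
  (1 + ((1 - theta)%:C)%C * z) / (1 - (theta%:C)%C * z).

(* stability region {z | |R_theta(z)| < 1}; we require the denominator to be
   nonzero so that R_theta(z) is actually defined (at the pole z = 1/theta,
   |R_theta| = +oo, so z is not in the region). *)
Definition stab_region (theta : R) : set R[i] :=
  [set z | 1 - (theta%:C)%C * z != 0 /\ `|stabR theta z| < 1].

Definition stabRinv (theta w : R) : R := (1 - w) / (theta * (1 - w) - 1).

Definition sigmoid (t : R) : R := 1 / (1 + expR (- t)).

Definition act_norm (sigma : R -> R) : R :=
  sup (range (fun t => `|derive1 sigma t|)).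

Definition euclid_norm m (v : 'cV[R]_m) : R := Num.sqrt (\sum_i v i 0 ^+ 2).

Definition spec_norm m k (A : 'M[R]_(m, k)) : R :=
  sup [set euclid_norm (A *m v) | v in [set v : 'cV[R]_k | euclid_norm v <= 1]].

Definition jacobianC m (f : 'cV[R]_m -> 'cV[R]_m) (x : 'cV[R]_m) : 'M[R]_m :=
  \matrix_(i, j) ('d f x (delta_mx j 0)) i 0.

(* spectrally normalized network.  Layer i (0-based; paper's layer i+1) maps
   R^(dims i) to R^(dims i.+1). *)
Variables (sigma : R -> R) (dims : nat -> nat)
  (gam : forall i, 'M[R]_(dims i.+1, dims i)) (b : forall i, 'cV[R]_(dims i.+1)).

Definition gam_tilde i : 'M[R]_(dims i.+1, dims i) :=
  (act_norm sigma * spec_norm (gam i))^-1 *: gam i.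

Definition layer i (x : 'cV[R]_(dims i)) : 'cV[R]_(dims i.+1) :=
  map_mx sigma (gam_tilde i *m x + b i).

Fixpoint net (k : nat) : 'cV[R]_(dims 0%N) -> 'cV[R]_(dims k) :=
  match k return 'cV[R]_(dims 0%N) -> 'cV[R]_(dims k) with
  | 0 => fun x => x
  | k'.+1 => fun x => layer (net k' x)
  end.

Definition net_tilde n (hn : dims n = dims 0%N) (x : 'cV[R]_(dims 0%N)) : 'cV[R]_(dims 0%N) :=
  castmx (hn, erefl 1%N) (net n x).

Definition layer_field (theta gc gL : R) n (hn : dims n = dims 0%N)
    (x : 'cV[R]_(dims 0%N)) : 'cV[R]_(dims 0%N) :=
  let c := stabRinv theta (1 - sigmoid gc) in
  let r := Num.max 0 (stabRinv theta (1 - sigmoid gL) - c) in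
  c *: x + r *: net_tilde hn x.

End Defs.

(* Main.v *)
Require Import Defs.
From HB Require Import structures.
From mathcomp Require Import all_boot all_order all_algebra.
From mathcomp Require Import all_classical all_reals all_analysis.
From mathcomp Require Import complex.
From mathcomp Require Import ring lra.
Import Order.TTheory GRing.Theory Num.Theory.
Import numFieldNormedType.Exports.
Local Open Scope classical_set_scope.
Local Open Scope ring_scope.
Set Implicit Arguments. Unset Strict Implicit. Unset Printing Implicit Defensive.
Section S.
Variable R : realType.

Lemma sum_diff (V W : normedModType R) (I : Type) (r : seq I) (g : I -> V -> W) x :
 (forall i, differentiable (g i) x) ->
 differentiable (fun y => \sum_(i <- r) g i y) x /\
 'd (fun y => \sum_(i <- r) g i y) x = (fun v => \sum_(i <- r) 'd (g i) x v) :> (V -> W).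
Proof.
move=> dg; elim: r => [|a r [IH1 IH2]].
  have -> : (fun y => \sum_(i <- [::]) g i y) = cst (0 : W).
    by apply/funext => y; rewrite big_nil.
  split; first exact: differentiable_cst.
  by rewrite diff_cst; apply/funext => v; rewrite big_nil.
have -> : (fun y => \sum_(i <- a :: r) g i y) = g a + (fun y => \sum_(i <- r) g i y).
  by apply/funext => y; rewrite big_cons.
split; first exact: differentiableD.
rewrite diffD // IH2; apply/funext => v /=; by rewrite big_cons.
Qed.

Lemma mx_diff (V : normedModType R) m n (f : V -> 'M[R]_(m,n)) x :
 (forall i j, differentiable (fun y => f y i j) x) ->
 differentiable f x /\ forall v i j, 'd f x v i j = 'd (fun y => f y i j) x v.
Proof.
move=> df.
have E : f = (fun y => \sum_(i <- index_enum 'I_m) (fun y => \sum_(j <- index_enum 'I_n) (fun y => f y i j *: delta_mx i j) y) y).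
  by apply/funext => y; rewrite {1}(matrix_sum_delta (f y)).
have dij : forall i j, differentiable (fun y => f y i j *: (delta_mx i j : 'M[R]_(m,n))) x.
  by move=> i j; apply: differentiableZl.
have di : forall i, differentiable (fun y => \sum_(j <- index_enum 'I_n) (fun y => f y i j *: (delta_mx i j : 'M[R]_(m,n))) y) x.
  by move=> i; case: (sum_diff (index_enum 'I_n) (dij i)).
have [D1 D2] := sum_diff (index_enum 'I_m) di.
split; first by rewrite E.
move=> v i j.
rewrite [in LHS]E D2.
have -> : (\sum_(i0 <- index_enum 'I_m) 'd (fun y => \sum_(j0 <- index_enum 'I_n) (fun y0 => f y0 i0 j0 *: (delta_mx i0 j0 : 'M[R]_(m,n))) y) x v)
   = \sum_(i0 < m) \sum_(j0 < n) ('d (fun y => f y i0 j0) x v) *: (delta_mx i0 j0 : 'M[R]_(m,n)).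
  apply: eq_bigr => i0 _; case: (sum_diff (index_enum 'I_n) (dij i0)) => _ ->.
  by apply: eq_bigr => j0 _; rewrite diffZl.
rewrite [X in _ = X](_ : _ = (\matrix_(i0,j0) 'd (fun y => f y i0 j0) x v : 'M[R]_(m,n)) i j); last by rewrite mxE.
congr (fun_of_matrix _ i j); rewrite [RHS]matrix_sum_delta.
by apply: eq_bigr => ? _; apply: eq_bigr => ? _; rewrite mxE.
Qed.

Lemma coord_diff m n (i : 'I_m) (j : 'I_n) (x : 'M[R]_(m,n)) :
  'd (fun N : 'M[R]_(m, n) => N i j) x = (fun N : 'M[R]_(m,n) => N i j) :> (_ -> R).
Proof.
have @f : {linear 'M[R]_(m, n) -> R}.
  by exists (fun N : 'M[R]_(_, _) => N i j); do 2![eexists]; do ?[constructor];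
     rewrite ?mxE// => ? *; rewrite ?mxE//; move=> ?; rewrite !mxE.
rewrite (_ : (fun _ => _) = f) //; apply: diff_lin; exact: coord_continuous.
Qed.

Lemma affine_diff p q s (G : 'M[R]_(q,p)) (bb : 'M[R]_(q,s)) k j (x : 'M[R]_(p,s)) :
  differentiable (fun y => (G *m y + bb) k j) x /\
  'd (fun y => (G *m y + bb) k j) x = (fun v => (G *m v) k j) :> (_ -> R).
Proof.
have E : (fun y : 'M[R]_(p,s) => (G *m y + bb) k j) =
   (fun y => \sum_(l <- index_enum 'I_p) (G k l *: (fun y : 'M[R]_(p,s) => y l j)) y) + cst (bb k j).
  by apply/funext => y; rewrite /= !mxE.
have dl : forall l, differentiable (G k l *: (fun y : 'M[R]_(p,s) => y l j)) x.
  by move=> l; apply: differentiableZ; apply: differentiable_coord.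
have [D1 D2] := sum_diff (index_enum 'I_p) dl.
rewrite E; split; first by apply: differentiableD => //; apply: differentiable_cst.
rewrite diffD //.
rewrite D2 diff_cst; apply/funext => v /=; rewrite mxE addr0.
apply: eq_bigr => l _; rewrite diffZ; last by apply: differentiable_coord.
by rewrite coord_diff.
Qed.

Lemma layer_diff (sigma : R -> R) p q (G : 'M[R]_(q,p)) (bb : 'cV[R]_q) (x : 'cV[R]_p) :
  (forall t, derivable sigma t 1) ->
  differentiable (fun y => map_mx sigma (G *m y + bb)) x /\
  forall v k j, 'd (fun y => map_mx sigma (G *m y + bb)) x v k j =
     (G *m v) k j * derive1 sigma ((G *m x + bb) k j).
Proof.
move=> ds.
have de : forall k j, differentiable (fun y => (map_mx sigma (G *m y + bb)) k j) x /\
   'd (fun y => (map_mx sigma (G *m y + bb)) k j) x = (fun v => (G *m v) k j * derive1 sigma ((G *m x + bb) k j)) :> (_ -> R).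
  move=> k j.
  have -> : (fun y => (map_mx sigma (G *m y + bb)) k j) = sigma \o (fun y => (G *m y + bb) k j).
    by apply/funext => y; rewrite /= mxE.
  have [A1 A2] := affine_diff G bb k j x.
  have dsx : differentiable sigma ((G *m x + bb) k j) by apply/derivable1_diffP.
  split; first exact: differentiable_comp.
  rewrite diff_comp // A2 deriv1E //.
have [M1 M2] := mx_diff (fun k j => (de k j).1).
split => // v k j; rewrite M2; by rewrite (de k j).2.
Qed.
End S.
Section N.
Variable R : realType.

Definition sq m (v : 'cV[R]_m) : R := \sum_i v i 0 ^+ 2.

Lemma sq_ge0 m (v : 'cV[R]_m) : 0 <= sq v.
Proof. by apply: sumr_ge0 => i _; apply: sqr_ge0. Qed.

Lemma euclidE m (v : 'cV[R]_m) : euclid_norm v = Num.sqrt (sq v).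
Proof. by []. Qed.

Lemma euclid_ge0 m (v : 'cV[R]_m) : 0 <= euclid_norm v.
Proof. exact: sqrtr_ge0. Qed.

Lemma euclid_sq m (v : 'cV[R]_m) : euclid_norm v ^+ 2 = sq v.
Proof. by rewrite euclidE sqr_sqrtr // sq_ge0. Qed.

Lemma entry_le_sq m (v : 'cV[R]_m) l : v l 0 ^+ 2 <= sq v.
Proof.
rewrite /sq (bigD1 l) //= lerDl; apply: sumr_ge0 => i _; exact: sqr_ge0.
Qed.

Lemma entry_le_euclid m (v : 'cV[R]_m) l : `|v l 0| <= euclid_norm v.
Proof. by rewrite -sqrtr_sqr euclidE ler_sqrt ?sq_ge0 // entry_le_sq. Qed.

Lemma sqZ m (c : R) (v : 'cV[R]_m) : sq (c *: v) = c ^+ 2 * sq v.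
Proof. by rewrite /sq mulr_sumr; apply: eq_bigr => i _; rewrite mxE exprMn. Qed.

Lemma euclidZ m (c : R) (v : 'cV[R]_m) : euclid_norm (c *: v) = `|c| * euclid_norm v.
Proof. by rewrite !euclidE sqZ sqrtrM ?sqr_ge0 // sqrtr_sqr. Qed.

Lemma sq_eq0 m (v : 'cV[R]_m) : sq v = 0 -> v = 0.
Proof.
move=> h; apply/matrixP => i j; rewrite (ord1 j) mxE.
move: h; rewrite /sq => /psumr_eq0P h.
have /eqP := h (fun i _ => sqr_ge0 _) i isT.
by rewrite sqrf_eq0 => /eqP.
Qed.

Lemma euclid0 m : euclid_norm (0 : 'cV[R]_m) = 0.
Proof. by rewrite euclidE /sq big1 ?sqrtr0 // => i _; rewrite mxE expr0n. Qed.

Lemma spec_bounded m k (A : 'M[R]_(m, k)) :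
  has_ubound [set euclid_norm (A *m v) | v in [set v : 'cV[R]_k | euclid_norm v <= 1]].
Proof.
exists (Num.sqrt (\sum_i (\sum_l `|A i l|) ^+ 2)) => _ [v /= hv <-].
rewrite euclidE ler_sqrt; last by apply: sumr_ge0 => i _; apply: sqr_ge0.
apply: ler_sum => i _.
have h1 : `|(A *m v) i 0| <= \sum_l `|A i l|.
  rewrite mxE; apply: le_trans (ler_norm_sum _ _ _) _.
  apply: ler_sum => l _; rewrite normrM ler_piMr //.
  exact: le_trans (entry_le_euclid v l) hv.
rewrite -[X in X <= _]real_normK ?num_real // !expr2.
by apply: ler_pM.
Qed.

Lemma spec_le m k (A : 'M[R]_(m, k)) (v : 'cV[R]_k) :
  euclid_norm (A *m v) <= spec_norm A * euclid_norm v.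
Proof.
have [e0|en0] := eqVneq (euclid_norm v) 0.
  have v0 : v = 0 by apply: sq_eq0; rewrite -euclid_sq e0 expr0n.
  by rewrite v0 mulmx0 !euclid0 mulr0.
have ep : 0 < euclid_norm v by rewrite lt0r en0 euclid_ge0.
have : euclid_norm (A *m ((euclid_norm v)^-1 *: v)) <= spec_norm A.
  apply: ub_le_sup; first exact: spec_bounded.
  exists ((euclid_norm v)^-1 *: v) => //=.
  by rewrite euclidZ ger0_norm ?invr_ge0 ?euclid_ge0 // mulVf.
rewrite -scalemxAr euclidZ ger0_norm ?invr_ge0 ?euclid_ge0 //.
by rewrite ler_pdivrMl // mulrC.
Qed.

Lemma spec_gt0 m k (A : 'M[R]_(m, k)) : A != 0 -> 0 < spec_norm A.
Proof.
move=> An0.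
have [i [l hil]] : exists i l, A i l != 0.
  apply: contrapT => H; move/eqP: An0; apply; apply/matrixP => i l; rewrite mxE.
  by apply/eqP/negPn/negP => h; apply: H; exists i, l.
have e1 : A *m delta_mx l 0 = col l A by rewrite colE.
have h1 : (A *m (delta_mx l 0 : 'cV[R]_k)) i 0 = A i l by rewrite e1 mxE.
apply: (@lt_le_trans _ _ (euclid_norm (A *m (delta_mx l 0 : 'cV[R]_k)))).
  by apply: lt_le_trans (entry_le_euclid _ i); rewrite h1 normr_gt0.
apply: ub_le_sup; first exact: spec_bounded.
exists ((delta_mx l 0 : 'cV[R]_k)) => //=.
rewrite euclidE /sq (bigD1 l) //= big1 ?addr0 ?mxE ?eqxx ?expr1n ?sqrtr1 //.
by move=> i' /negbTE hi; rewrite mxE hi /= expr0n.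
Qed.
End N.
Section L.
Variable R : realType.

Lemma act_le (sigma : R -> R) t :
  has_ubound (range (fun t => `|derive1 sigma t|)) -> `|derive1 sigma t| <= act_norm sigma.
Proof. by move=> H; apply: ub_le_sup => //; exists t. Qed.

Lemma layer_bound (sigma : R -> R) (dims : nat -> nat)
  (gam : forall i, 'M[R]_(dims i.+1, dims i)) (b : forall i, 'cV[R]_(dims i.+1)) i
  (y v : 'cV[R]_(dims i)) :
  (forall t, derivable sigma t 1) -> has_ubound (range (fun t => `|derive1 sigma t|)) ->
  0 < act_norm sigma -> gam i != 0 ->
  differentiable (@layer R sigma dims gam b i) y /\
  sq ('d (@layer R sigma dims gam b i) y v) <= sq v.
Proof.
move=> ds hub ap gn0.
have lf : @layer R sigma dims gam b i = fun y => map_mx sigma (gam_tilde sigma gam i *m y + b i) by [].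
rewrite lf; have [D1 D2] := layer_diff (gam_tilde sigma gam i) (b i) y ds.
split => //.
set a := act_norm sigma; set s := spec_norm (gam i).
have sp : 0 < s by apply: spec_gt0.
have h1 : sq ('d (fun y => map_mx sigma (gam_tilde sigma gam i *m y + b i)) y v)
   <= a ^+ 2 * sq (gam_tilde sigma gam i *m v).
  rewrite /sq mulr_sumr; apply: ler_sum => k _; rewrite D2 exprMn mulrC.
  apply: ler_wpM2r; first exact: sqr_ge0.
  rewrite -real_normK ?num_real // !expr2; apply: ler_pM => //; exact: act_le.
apply: le_trans h1 _.
have -> : gam_tilde sigma gam i *m v = (a * s)^-1 *: (gam i *m v) by rewrite /gam_tilde -scalemxAl.
rewrite sqZ -euclid_sq.
have h2 : euclid_norm (gam i *m v) ^+ 2 <= s ^+ 2 * sq v.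
  rewrite -euclid_sq -exprMn !expr2; apply: ler_pM; rewrite ?euclid_ge0 //; exact: spec_le.
apply: le_trans (ler_wpM2l _ (ler_wpM2l _ h2)) _.
- exact: sqr_ge0.
- by rewrite exprVn invr_ge0; exact: sqr_ge0.
have an : a != 0 by rewrite gt_eqF.
have sn : s != 0 by rewrite gt_eqF.
rewrite mulrA mulrA exprVn exprMn; rewrite le_eqVlt; apply/orP; left; apply/eqP.
by field; rewrite sn an.
Qed.

Lemma net_bound (sigma : R -> R) (dims : nat -> nat)
  (gam : forall i, 'M[R]_(dims i.+1, dims i)) (b : forall i, 'cV[R]_(dims i.+1)) n :
  (forall t, derivable sigma t 1) -> has_ubound (range (fun t => `|derive1 sigma t|)) ->
  0 < act_norm sigma -> (forall i, (i < n)%N -> gam i != 0) ->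
  forall k, (k <= n)%N -> forall x,
  differentiable (@net R sigma dims gam b k) x /\
  forall v, sq ('d (@net R sigma dims gam b k) x v) <= sq v.
Proof.
move=> ds hub ap gn0; elim => [|k IH] hk x.
  have -> : @net R sigma dims gam b 0 = id by [].
  have hid := is_diff_id x. split; first exact: ex_diff.
  by move=> v; rewrite diff_val.
have -> : @net R sigma dims gam b k.+1 = (@layer R sigma dims gam b k) \o (@net R sigma dims gam b k) by [].
have [N1 N2] := IH (ltnW hk) x.
have [L1 _] := layer_bound b (net sigma gam b k x) 0 ds hub ap (gn0 k hk).
split; first exact: differentiable_comp.
move=> v; rewrite diff_comp //=.
have [_ L2] := layer_bound b (net sigma gam b k x) ('d (net sigma gam b k) x v) ds hub ap (gn0 k hk).
exact: le_trans L2 (N2 v).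
Qed.

Lemma cast_bound k D (e : k = D) (f : 'cV[R]_D -> 'cV[R]_k) x :
  differentiable f x -> (forall v, sq ('d f x v) <= sq v) ->
  differentiable (fun y => castmx (e, erefl 1%N) (f y)) x /\
  forall v, sq ('d (fun y => castmx (e, erefl 1%N) (f y)) x v) <= sq v.
Proof.
subst k => d1 d2.
have -> : (fun y => castmx (erefl D, erefl 1%N) (f y)) = f.
  by apply/funext => y; rewrite castmx_id.
by split.
Qed.

Lemma jacobian_mul m (f : 'cV[R]_m -> 'cV[R]_m) x (p : 'cV[R]_m) :
  jacobianC f x *m p = 'd f x p.
Proof.
have pe : p = \sum_j p j 0 *: (delta_mx j 0 : 'cV[R]_m).
  rewrite {1}[p]matrix_sum_delta; apply: eq_bigr => j _; by rewrite big_ord1.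
rewrite [in RHS]pe linear_sum; apply/matrixP => i j; rewrite (ord1 j).
rewrite !mxE summxE; apply: eq_bigr => l _; rewrite linearZ /= !mxE mulrC.
by [].
Qed.

End L.

Set Strict Implicit.
Section L2. Variable R : realType.
Lemma nt_bound (sigma : R -> R) (dims : nat -> nat)
  (gam : forall i, 'M[R]_(dims i.+1, dims i)) (b : forall i, 'cV[R]_(dims i.+1)) n
  (hn : dims n = dims 0%N) x :
  (forall t, derivable sigma t 1) -> has_ubound (range (fun t => `|derive1 sigma t|)) ->
  0 < act_norm sigma -> (forall i, (i < n)%N -> gam i != 0) ->
  differentiable (net_tilde sigma gam b hn) x /\
  forall v, sq ('d (net_tilde sigma gam b hn) x v) <= sq v.
Proof.
move=> ds hub ap gn0.
have [N1 N2] := net_bound b ds hub ap gn0 (leqnn n) x.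
rewrite /net_tilde.
move: (net sigma gam b n) N1 N2 => f.
move: (dims n) f hn => k f e.
subst k => N1 N2.
have -> : (fun y => castmx (erefl (dims 0%N), erefl 1%N) (f y)) = f.
  by apply/funext => y; rewrite castmx_id.
by split.
Qed.

Lemma diff_comb (V : normedModType R) (g F G : V -> V) (c r : R) x :
  differentiable g x -> F = (fun y => c *: y + r *: g y) -> G = (fun v => c *: v + r *: 'd g x v) ->
  forall v, 'd F x v = G v.
Proof.
move=> dg -> -> v.
have -> : (fun y => c *: y + r *: g y) = ( *:%R c) + r *: g.
  by rewrite addrfctE scalrfctE.
have hs := is_diff_scaler c x.
have H1 : differentiable ( *:%R c) x by exact: ex_diff.
rewrite (diffD H1 (differentiableZ r dg)) (diffZ _ dg) diff_val.
by [].
Qed.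

Lemma field_diff (sigma : R -> R) (dims : nat -> nat)
  (gam : forall i, 'M[R]_(dims i.+1, dims i)) (b : forall i, 'cV[R]_(dims i.+1)) n
  (hn : dims n = dims 0%N) theta gc gL x :
  (forall t, derivable sigma t 1) -> has_ubound (range (fun t => `|derive1 sigma t|)) ->
  0 < act_norm sigma -> (forall i, (i < n)%N -> gam i != 0) ->
  forall v, 'd (layer_field sigma gam b theta gc gL hn) x v =
     stabRinv theta (1 - sigmoid gc) *: v +
     Num.max 0 (stabRinv theta (1 - sigmoid gL) - stabRinv theta (1 - sigmoid gc)) *:
       'd (net_tilde sigma gam b hn) x v.
Proof.
move=> ds hub ap gn0 v.
have [T1 _] := @nt_bound sigma dims gam b n hn x ds hub ap gn0.
pose G := fun v => stabRinv theta (1 - sigmoid gc) *: v +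
     Num.max 0 (stabRinv theta (1 - sigmoid gL) - stabRinv theta (1 - sigmoid gc)) *:
       'd (net_tilde sigma gam b hn) x v.
change ('d (layer_field sigma gam b theta gc gL hn) x v = G v).
apply: (@diff_comb _ (net_tilde sigma gam b hn) (layer_field sigma gam b theta gc gL hn) G (stabRinv theta (1 - sigmoid gc)) (Num.max 0 (stabRinv theta (1 - sigmoid gL) - stabRinv theta (1 - sigmoid gc))) x T1 _ _ v).
  reflexivity.
reflexivity.
Qed.
End L2.
Section C. Variable R : realType.

Lemma stab_real (theta c r a bt : R) :
  0 <= theta <= 1 -> 0 <= r -> c + r < 0 -> 0 < 1 + (1 - theta) * c ->
  0 < 1 + (1 - theta) * (c + r) ->
  (a - c) ^+ 2 + bt ^+ 2 <= r ^+ 2 ->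
  a < 0 /\ 2 * a + (1 - 2 * theta) * (a ^+ 2 + bt ^+ 2) < 0.
Proof.
move=> /andP [t0 t1] r0 m0 hc hm hd.
have har : a <= c + r.
  have : (a - c) ^+ 2 <= r ^+ 2 by apply: le_trans hd; rewrite lerDl sqr_ge0.
  move=> h; nra.
split; first lra.
have [k0|k0] := lerP (1 - 2 * theta) 0.
  have : 0 <= a ^+ 2 + bt ^+ 2 by nra.
  nra.
have h1 : a ^+ 2 + bt ^+ 2 <= r ^+ 2 - c ^+ 2 + 2 * a * c by nra.
have h2 : 0 < 1 + (1 - 2 * theta) * c by nra.
have h3 : 2 * a + (1 - 2 * theta) * (a ^+ 2 + bt ^+ 2) <= 2 * a * (1 + (1 - 2 * theta) * c) + (1 - 2 * theta) * (r ^+ 2 - c ^+ 2) by nra.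
have h4 : 2 * a * (1 + (1 - 2 * theta) * c) <= 2 * (c + r) * (1 + (1 - 2 * theta) * c) by nra.
have h5 : 0 < 2 + (1 - 2 * theta) * (c + r) by nra.
nra.
Qed.

Lemma stab_cplx (theta a bt : R) :
  a < 0 -> 2 * a + (1 - 2 * theta) * (a ^+ 2 + bt ^+ 2) < 0 ->
  (a +i* bt)%C \in stab_region theta.
Proof.
move=> a0 h.
have key : (1 + (1 - theta) * a) ^+ 2 + ((1 - theta) * bt) ^+ 2 < (1 - theta * a) ^+ 2 + (theta * bt) ^+ 2.
  nra.
have dpos : 0 < (1 - theta * a) ^+ 2 + (theta * bt) ^+ 2.
  nra.
rewrite inE /stab_region /stabR /=.
have den : (1 - (theta%:C)%C * (a +i* bt)%C) = ((1 - theta * a) +i* (- (theta * bt)))%C.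
  by apply/eqP; rewrite eq_complex /=; apply/andP; split; apply/eqP; ring.
have num : (1 + ((1 - theta)%:C)%C * (a +i* bt)%C) = ((1 + (1 - theta) * a) +i* ((1 - theta) * bt))%C.
  by apply/eqP; rewrite eq_complex /=; apply/andP; split; apply/eqP; ring.
rewrite den num.
have Dn : `|((1 - theta * a) -i* (theta * bt))%C| = (Num.sqrt ((1 - theta * a) ^+ 2 + (theta * bt) ^+ 2))%:C%C.
  by rewrite -[in RHS](sqrrN (theta * bt)).
have Nn : `|((1 + (1 - theta) * a) +i* ((1 - theta) * bt))%C| = (Num.sqrt ((1 + (1 - theta) * a) ^+ 2 + ((1 - theta) * bt) ^+ 2))%:C%C.
  by [].
have Dp : 0 < `|((1 - theta * a) -i* (theta * bt))%C|.
  by rewrite Dn ltcR sqrtr_gt0.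
split; first by rewrite -normr_gt0.
rewrite normf_div ltr_pdivrMr // mul1r Dn Nn ltcR ltr_sqrt //.
Qed.

Lemma sig_bounds (g : R) : 0 < 1 - sigmoid g < 1.
Proof.
rewrite /sigmoid; have e0 := expR_gt0 (- g).
have h : 1 - 1 / (1 + expR (- g)) = expR (- g) / (1 + expR (- g)).
  by field; rewrite gt_eqF // ltr_wpDr // ltW.
rewrite h; apply/andP; split; first by rewrite divr_gt0 // addr_gt0.
by rewrite ltr_pdivrMr ?addr_gt0 // mul1r ltrDr.
Qed.

Lemma c_bounds (theta w : R) : 0 <= theta <= 1 -> 0 < w < 1 ->
  stabRinv theta w < 0 /\ 0 < 1 + (1 - theta) * stabRinv theta w.
Proof.
move=> /andP [t0 t1] /andP [w0 w1].
rewrite /stabRinv.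
have dn : theta * (1 - w) - 1 < 0 by nra.
have cd : (1 - w) / (theta * (1 - w) - 1) * (theta * (1 - w) - 1) = 1 - w.
  by field; rewrite lt_eqF.
move: cd dn; set c := _ / _; set d := _ - 1 => cd dn.
have e1 : (1 + (1 - theta) * c) * d = - w.
  rewrite mulrDl mul1r -mulrA cd /d; ring.
clearbody c d.
split.
  have : c * d > 0 by rewrite cd subr_gt0.
  nra.
have : (1 + (1 - theta) * c) * d < 0 by rewrite e1 oppr_lt0.
nra.
Qed.
End C.

Unset Implicit Arguments.
Lemma ReD (R : realType) (x y : R[i]) : complex.Re (x + y) = complex.Re x + complex.Re y.
Proof. by case: x; case: y. Qed.
Lemma ImD (R : realType) (x y : R[i]) : complex.Im (x + y) = complex.Im x + complex.Im y.
Proof. by case: x; case: y. Qed.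
Lemma ReS (R : realType) n (f : 'I_n -> R[i]) : complex.Re (\sum_j f j) = \sum_j complex.Re (f j).
Proof. by elim/big_rec2: _ => // j y1 y2 _ <-; rewrite ReD. Qed.
Lemma ImS (R : realType) n (f : 'I_n -> R[i]) : complex.Im (\sum_j f j) = \sum_j complex.Im (f j).
Proof. by elim/big_rec2: _ => // j y1 y2 _ <-; rewrite ImD. Qed.
Lemma ReM (R : realType) (x y : R[i]) : complex.Re (x * y) = complex.Re x * complex.Re y - complex.Im x * complex.Im y.
Proof. by case: x; case: y. Qed.
Lemma ImM (R : realType) (x y : R[i]) : complex.Im (x * y) = complex.Re x * complex.Im y + complex.Im x * complex.Re y.
Proof. by case: x => a b; case: y => c d /=; rewrite addrC. Qed.

Lemma eigvec (R : realType) m (A : 'M[R[i]]_m) lam : eigenvalue A lam ->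
  exists2 w : 'cV[R[i]]_m, w != 0 & A *m w = lam *: w.
Proof.
move/eigenvalueP => [v vA vn0].
have : \det (lam%:M - A) == 0.
  by apply/det0P; exists v => //; rewrite mulmxBr vA mul_mx_scalar subrr.
rewrite -det_tr => /det0P [u un0 uA].
exists u^T; first by rewrite trmx_eq0.
have := congr1 trmx uA; rewrite trmx_mul trmxK trmx0 mulmxBl mul_scalar_mx.
by move/eqP; rewrite subr_eq0 => /eqP ->.
Qed.

Lemma max_facts (R : realType) (theta c cL r : R) : c < 0 -> cL < 0 -> 0 < 1 + (1 - theta) * c ->
  0 < 1 + (1 - theta) * cL -> r = Num.max 0 (cL - c) ->
  0 <= r /\ c + r < 0 /\ 0 < 1 + (1 - theta) * (c + r).
Proof.
move=> c0 cL0 c1 cL1 Er.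
have r0 : 0 <= r by rewrite Er le_max lexx.
have r1 : cL - c <= r by rewrite Er le_max lexx orbT.
case: (leP 0 (cL - c)) => h.
  have r2 : r <= cL - c by rewrite Er ge_max h lexx.
  by split; [|split]; nra.
have r2 : r <= 0 by rewrite Er ge_max (ltW h) lexx.
by split; [|split]; nra.
Qed.

Theorem theorem1 (R : realType) (theta : R) (sigma : R -> R)
  (n : nat) (dims : nat -> nat)
  (gam : forall i, 'M[R]_(dims i.+1, dims i)) (b : forall i, 'cV[R]_(dims i.+1))
  (hn : dims n = dims 0%N) (gc gL : R) :
  0 <= theta <= 1 ->
  (forall t : R, derivable sigma t 1) ->
  has_ubound (range (fun t => `|derive1 sigma t|)) ->
  0 < act_norm sigma ->
  (0 < n)%N ->
  (forall i, (i < n)%N -> gam i != 0) ->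
  forall (x : 'cV[R]_(dims 0%N)) (lam : R[i]),
    eigenvalue (map_mx (fun a : R => (a%:C)%C)
                  (jacobianC (layer_field sigma gam b theta gc gL hn) x)) lam ->
    lam \in stab_region theta.
Proof.
move=> th ds hub ap n0 gn0 x lam Heig.
have [_ KB] := @nt_bound R sigma dims gam b n hn x ds hub ap gn0.
have FD := @field_diff R sigma dims gam b n hn theta gc gL x ds hub ap gn0.
move: Heig KB FD.
move: (jacobianC (layer_field sigma gam b theta gc gL hn) x) (jacobian_mul (layer_field sigma gam b theta gc gL hn) x) => J JM.
move: ('d (layer_field sigma gam b theta gc gL hn) x) JM => L JM.
move: ('d (net_tilde sigma gam b hn) x) => K.
move: (stabRinv theta (1 - sigmoid gc)) (@c_bounds R _ _ th (@sig_bounds R gc)) => c [c0 c1].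
move: (stabRinv theta (1 - sigmoid gL)) (@c_bounds R _ _ th (@sig_bounds R gL)) => cL [cL0 cL1].
move=> Heig KB FD.
have JE : forall p, J *m p = c *: p + Num.max 0 (cL - c) *: K p by move=> p; rewrite JM FD.
clear JM FD.
have hr := @max_facts R theta c cL _ c0 cL0 c1 cL1 (erefl (Num.max 0 (cL - c))).
move: (Num.max 0 (cL - c)) hr JE => r [r0 [m0 m1]] JE.
have [w wn0 Aw] := @eigvec _ _ _ _ Heig.
clear Heig; case: lam Aw => al bt Aw.
pose p := map_mx (@complex.Re R) w.
pose q := map_mx (@complex.Im R) w.
have Ep : forall i, (J *m p) i 0 = al * p i 0 - bt * q i 0.
  move=> i; have := congr1 (fun M : 'cV[R[i]]_(dims 0%N) => complex.Re (M i 0)) Aw => /=.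
  rewrite !mxE ReS ReM /= => <-; apply: eq_bigr => j _; rewrite !mxE ReM /=.
  by rewrite mul0r subr0.
have Eq : forall i, (J *m q) i 0 = al * q i 0 + bt * p i 0.
  move=> i; have := congr1 (fun M : 'cV[R[i]]_(dims 0%N) => complex.Im (M i 0)) Aw => /=.
  rewrite !mxE ImS ImM /= => <-; apply: eq_bigr => j _; rewrite !mxE ImM /=.
  by rewrite mul0r addr0.
have Kp : forall i, r * (K p) i 0 = (al - c) * p i 0 - bt * q i 0.
  by move=> i; have := Ep i; rewrite JE !mxE => h; lra.
have Kq : forall i, r * (K q) i 0 = (al - c) * q i 0 + bt * p i 0.
  by move=> i; have := Eq i; rewrite JE !mxE => h; lra.
have S : r ^+ 2 * (sq (K p) + sq (K q)) = ((al - c) ^+ 2 + bt ^+ 2) * (sq p + sq q).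
  rewrite /sq !mulrDr !mulr_sumr -!big_split; apply: eq_bigr => i _ /=.
  by rewrite -!exprMn Kp Kq; ring.
have Npos : 0 < sq p + sq q.
  rewrite lt_def addr_ge0 ?sq_ge0 // andbT; apply/negP => /eqP h.
  have hp : sq p = 0 by have := sq_ge0 p; have := sq_ge0 q; lra.
  have hq : sq q = 0 by have := sq_ge0 p; have := sq_ge0 q; lra.
  have p0 := sq_eq0 hp; have q0 := sq_eq0 hq.
  move/eqP: wn0; apply; apply/matrixP => i j; rewrite (ord1 j) [RHS]mxE.
  move: (congr1 (fun M : 'cV[R]_(dims 0%N) => M i 0) p0) (congr1 (fun M : 'cV[R]_(dims 0%N) => M i 0) q0).
  rewrite !mxE /=; case: (w i 0) => u v /= -> ->; done.
have D : (al - c) ^+ 2 + bt ^+ 2 <= r ^+ 2.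
  have : ((al - c) ^+ 2 + bt ^+ 2) * (sq p + sq q) <= r ^+ 2 * (sq p + sq q).
    rewrite -S; apply: ler_wpM2l; first exact: sqr_ge0.
    by apply: lerD; apply: KB.
  by rewrite ler_pM2r.
have [a0 h] := @stab_real R theta c r al bt th r0 m0 c1 m1 D.
exact: stab_cplx.
Qed.
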